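(* Comprehension $\sqsubseteq$ is a preorder (reflexive and transitive relation) on the set of splitting maps on a finite-dimensional Hilbert space $\mathcal H$.
   Context: A splitting map on $\mathcal H$ is an isometry $\chi:\mathcal H\to\mathcal H_L^\chi\otimes\mathcal H_R^\chi$ for some finite-dimensional Hilbert spaces $\mathcal H_L^\chi,\mathcal H_R^\chi$. For splitting maps $\zeta,\chi$ on $\mathcal H$, $\zeta\sqsubseteq\chi$ ($\zeta$ is comprehended in $\chi$) if there exist a Hilbert space $\mathcal H_M$ and isometries $\bullet:\mathcal H_R^\zeta\to\mathcal H_M\otimes\mathcal H_R^\chi$ and $\circ:\mathcal H_L^\chi\to\mathcal H_L^\zeta\otimes\mathcal H_M$ such that $(\mathbb 1_{\mathcal H_L^\zeta}\otimes\bullet)\zeta=(\circ\otimes\mathbb 1_{\mathcal H_R^\chi})\chi$ as maps $\mathcal H\to\mathcal H_L^\zeta\otimes\mathcal H_M\otimes\mathcal H_R^\chi$. *)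

(* Defs.v *)
From HB Require Import structures.
From mathcomp Require Import all_boot all_order all_algebra.
From mathcomp Require Export mxtens.
Set Implicit Arguments. Unset Strict Implicit. Unset Printing Implicit Defensive.
Import GRing.Theory Num.Theory.
Local Open Scope ring_scope.

(* Finite-dimensional Hilbert spaces over a numeric closed field C (e.g. the
   complex numbers complex R), modelled as C^d with the standard inner
   product; linear maps C^n -> C^m are matrices 'M[C]_(m, n) acting on column
   vectors.  The tensor product C^a (x) C^b = C^(a*b) is the Kronecker product
   [tensmx] (from mathcomp real_closed/mxtens). *)

Definition adjmx (C : numClosedFieldType) m n (A : 'M[C]_(m, n)) : 'M[C]_(n, m) :=
  (map_mx Num.conj A)^T.

Definition isometry_mx (C : numClosedFieldType) m n (A : 'M[C]_(m, n)) : Prop :=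
  adjmx A *m A = 1%:M.

Record splitting_map (C : numClosedFieldType) (n : nat) := SplittingMap {
  dimL : nat;
  dimR : nat;
  smap : 'M[C]_(dimL * dimR, n);
  smap_isometry : isometry_mx smap
}.

(* zeta ⊑ chi : there exist H_M = C^k and isometries
   bullet : H_R^zeta -> H_M (x) H_R^chi,  circ : H_L^chi -> H_L^zeta (x) H_M
   with (1 (x) bullet) zeta = (circ (x) 1) chi as maps
   H -> H_L^zeta (x) H_M (x) H_R^chi  (the cast is the canonical
   associativity identification of C^(a*(k*b)) with C^((a*k)*b)). *)
Definition comprehended (C : numClosedFieldType) (n : nat)
  (zeta chi : splitting_map C n) : Prop :=
  exists (k : nat)
         (bullet : 'M[C]_(k * dimR chi, dimR zeta))
         (circ : 'M[C]_(dimL zeta * k, dimL chi)),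
    [/\ isometry_mx bullet, isometry_mx circ &
        castmx (mulnA (dimL zeta) k (dimR chi), erefl n)
          ((1%:M : 'M[C]_(dimL zeta)) *t bullet *m smap zeta)
        = (circ *t (1%:M : 'M[C]_(dimR chi))) *m smap chi].

(* Main.v *)
Require Import Defs.
From HB Require Import structures.
From mathcomp Require Import all_boot all_order all_algebra.
Set Implicit Arguments. Unset Strict Implicit. Unset Printing Implicit Defensive.
Import GRing.Theory Num.Theory.
Local Open Scope ring_scope.

Section Helpers.
Variable C : numClosedFieldType.

Lemma castmx_irr m n m' n' (e e' : (m = m') * (n = n')) (A : 'M[C]_(m, n)) :
  castmx e A = castmx e' A.
Proof. by case: e e' => e1 e2 [e1' e2']; rewrite (eq_irrelevance e1 e1') (eq_irrelevance e2 e2'). Qed.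

Lemma castmx_mulmx m m' n n' p p' (e1 : m = m') (e2 e2' : n = n') (e3 : p = p')
  (A : 'M[C]_(m, n)) (B : 'M[C]_(n, p)) :
  castmx (e1, e2) A *m castmx (e2', e3) B = castmx (e1, e3) (A *m B).
Proof.
rewrite (eq_irrelevance e2' e2); clear e2'.
by case: m' / e1; case: n' / e2; case: p' / e3; rewrite !castmx_id.
Qed.

Lemma castmx_sym m n m' n' (e1 : m = m') (e2 : n = n') (A : 'M[C]_(m, n)) B :
  castmx (e1, e2) A = B -> A = castmx (esym e1, esym e2) B.
Proof. by case: m' / e1 B; case: n' / e2 => B <-; rewrite !castmx_id. Qed.

Lemma tensmx_castl m m' n n' p q (e1 : m = m') (e2 : n = n')
  (A : 'M[C]_(m, n)) (B : 'M[C]_(p, q)) :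
  castmx (e1, e2) A *t B =
  castmx (congr1 (muln^~ p) e1, congr1 (muln^~ q) e2) (A *t B).
Proof. by case: m' / e1; case: n' / e2; rewrite !castmx_id. Qed.

Lemma tensmx_castr m n p p' q q' (e1 : p = p') (e2 : q = q')
  (A : 'M[C]_(m, n)) (B : 'M[C]_(p, q)) :
  A *t castmx (e1, e2) B =
  castmx (congr1 (muln m) e1, congr1 (muln n) e2) (A *t B).
Proof. by case: p' / e1; case: q' / e2; rewrite !castmx_id. Qed.

Lemma tensmxA m n p q r s (A : 'M[C]_(m, n)) (B : 'M[C]_(p, q)) (D : 'M[C]_(r, s)) :
  (A *t B) *t D = castmx (mulnA m p r, mulnA n q s) (A *t (B *t D)).
Proof.
apply/matrixP => i j.
case: (mxtens_indexP i) => i' i3; case: (mxtens_indexP i') => i1 i2.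
case: (mxtens_indexP j) => j' j3; case: (mxtens_indexP j') => j1 j2.
rewrite castmxE !tensmxE.
have -> : cast_ord (esym (mulnA m p r)) (mxtens_index (mxtens_index (i1, i2), i3))
   = mxtens_index (i1, mxtens_index (i2, i3)).
  by apply: val_inj => /=; rewrite mulnDl -mulnA addnA.
have -> : cast_ord (esym (mulnA n q s)) (mxtens_index (mxtens_index (j1, j2), j3))
   = mxtens_index (j1, mxtens_index (j2, j3)).
  by apply: val_inj => /=; rewrite mulnDl -mulnA addnA.
by rewrite !tensmxE mulrA.
Qed.

Lemma tens11 m p : (1%:M : 'M[C]_m) *t (1%:M : 'M[C]_p) = 1%:M.
Proof.
apply/matrixP => i j.
case: (mxtens_indexP i) => i1 i2; case: (mxtens_indexP j) => j1 j2.
rewrite tensmxE !mxE.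
have -> : (mxtens_index (i1, i2) == mxtens_index (j1, j2)) = ((i1, i2) == (j1, j2)).
  by apply/eqP/eqP => [/(can_inj (@mxtens_indexK _ _))|->].
by rewrite xpair_eqE; case: (i1 == j1); case: (i2 == j2); rewrite ?mulr1 ?mulr0 ?mul0r.
Qed.

Lemma castmx1 m m' (e e' : m = m') : castmx (e, e') (1%:M : 'M[C]_m) = 1%:M.
Proof. by rewrite (eq_irrelevance e' e); clear e'; case: m' / e; rewrite castmx_id. Qed.

Lemma adjmxM m n p (A : 'M[C]_(m, n)) (B : 'M[C]_(n, p)) :
  adjmx (A *m B) = adjmx B *m adjmx A.
Proof. by rewrite /adjmx map_mxM trmx_mul. Qed.

Lemma adjmxT m n p q (A : 'M[C]_(m, n)) (B : 'M[C]_(p, q)) :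
  adjmx (A *t B) = adjmx A *t adjmx B.
Proof. by apply/matrixP => i j; rewrite !mxE rmorphM. Qed.

Lemma adjmx1 m : adjmx (1%:M : 'M[C]_m) = 1%:M.
Proof. by rewrite /adjmx map_mx1 trmx1. Qed.

Lemma adjmx_cast m n m' n' (e1 : m = m') (e2 : n = n') (A : 'M[C]_(m, n)) :
  adjmx (castmx (e1, e2) A) = castmx (e2, e1) (adjmx A).
Proof. by case: m' / e1; case: n' / e2; rewrite !castmx_id. Qed.

Lemma iso_cast m n m' n' (e1 : m = m') (e2 : n = n') (A : 'M[C]_(m, n)) :
  isometry_mx A -> isometry_mx (castmx (e1, e2) A).
Proof. by rewrite /isometry_mx adjmx_cast castmx_mulmx => ->; rewrite castmx1. Qed.

Lemma iso_mul m n p (A : 'M[C]_(m, n)) (B : 'M[C]_(n, p)) :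
  isometry_mx A -> isometry_mx B -> isometry_mx (A *m B).
Proof.
rewrite /isometry_mx adjmxM => hA hB.
by rewrite mulmxA -(mulmxA (adjmx B)) hA mulmx1 hB.
Qed.

Lemma iso_tens m n p q (A : 'M[C]_(m, n)) (B : 'M[C]_(p, q)) :
  isometry_mx A -> isometry_mx B -> isometry_mx (A *t B).
Proof. by rewrite /isometry_mx adjmxT tensmx_mul => -> ->; rewrite tens11. Qed.

Lemma iso1 m : isometry_mx (1%:M : 'M[C]_m).
Proof. by rewrite /isometry_mx adjmx1 mulmx1. Qed.

Lemma castmx_mull m m' n n' p (e1 : m = m') (e2 : n = n') (A : 'M[C]_(m, n)) (B : 'M[C]_(n', p)) :
  castmx (e1, e2) A *m B = castmx (e1, erefl) (A *m castmx (esym e2, erefl) B).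
Proof. by case: m' / e1; case: n' / e2 B => B; rewrite !castmx_id. Qed.

End Helpers.

Theorem mainTheorem6 (C : numClosedFieldType) (n : nat) :
  (forall chi : splitting_map C n, comprehended chi chi) /\
  (forall zeta chi xi : splitting_map C n,
      comprehended zeta chi -> comprehended chi xi -> comprehended zeta xi).
Proof.
split.
  case=> dL dR s hs; rewrite /comprehended /=.
  exists 1%N, (castmx (esym (mul1n dR), erefl) 1%:M),
    (castmx (esym (muln1 dL), erefl) 1%:M).
  split; first exact/iso_cast/iso1.
    exact/iso_cast/iso1.
  rewrite tensmx_castr tens11 tensmx_castl tens11 !castmx_mull !mul1mx castmx_comp.
  rewrite castmx_id; exact: castmx_irr.
case=> Lz Rz z hz [Lc Rc c hc] [Lx Rx x hx]; rewrite /comprehended /=.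
case=> k1 [b1 [c1 [hb1 hc1 H1]]] [k2 [b2 [c2 [hb2 hc2 H2]]]].
exists (k1 * k2)%N, (castmx (mulnA k1 k2 Rx, erefl) ((1%:M : 'M[C]_k1) *t b2 *m b1)),
  (castmx (esym (mulnA Lz k1 k2), erefl) ((c1 *t (1%:M : 'M[C]_k2)) *m c2)).
split.
- by apply/iso_cast/iso_mul => //; apply/iso_tens => //; apply: iso1.
- by apply/iso_cast/iso_mul => //; apply/iso_tens => //; apply: iso1.
pose T := (c1 *t b2) *m c.
have eR : (castmx (esym (mulnA Lz k1 k2), erefl) ((c1 *t (1%:M : 'M[C]_k2)) *m c2)
   *t (1%:M : 'M[C]_Rx)) *m x = castmx (etrans (mulnA _ _ _) (congr1 (muln^~ Rx) (esym (mulnA Lz k1 k2))), erefl) T.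
  rewrite tensmx_castl castmx_mull castmx_id.
  have -> : ((c1 *t (1%:M : 'M[C]_k2)) *m c2) *t (1%:M : 'M[C]_Rx)
     = ((c1 *t (1%:M : 'M[C]_k2)) *t (1%:M : 'M[C]_Rx)) *m (c2 *t 1%:M).
    by rewrite tensmx_mul mulmx1.
  rewrite -mulmxA -H2 tensmxA tens11 castmx_mulmx mulmxA tensmx_mul mulmx1 mul1mx.
  by rewrite castmx_comp; apply: castmx_irr.
rewrite eR tensmx_castr castmx_mull castmx_id.
have -> : (1%:M : 'M[C]_Lz) *t ((1%:M : 'M[C]_k1) *t b2 *m b1)
   = ((1%:M : 'M[C]_Lz) *t ((1%:M : 'M[C]_k1) *t b2)) *m ((1%:M : 'M[C]_Lz) *t b1).
  by rewrite tensmx_mul mulmx1.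
rewrite -mulmxA (castmx_sym H1).
rewrite (castmx_sym (esym (tensmxA (1%:M : 'M[C]_Lz) (1%:M : 'M[C]_k1) b2))) tens11.
rewrite castmx_mulmx mulmxA tensmx_mul mulmx1 mul1mx !castmx_comp.
exact: castmx_irr.
Qed.
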